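(* Let $K$ be the fractal percolation on $[0,1]$ with parameters $M\in\mathbb{N}_{\geq2}$ and $p\in[0,1]$, with construction steps $K_n$. Then for any $n\in\mathbb{N}_0$, $$\mathbb{E}V_1(K_n)=p^n,\qquad \mathbb{E}V_0(K_n)=(Mp)^n\left(1-\frac{(M-1)p}{M-p}\left[1-\left(\frac pM\right)^n\right]\right).$$
   Context: Fractal percolation on $[0,1]$: $K_0=[0,1]$; given $K_{n-1}$, a union of closed intervals $[iM^{-(n-1)},(i+1)M^{-(n-1)}]$, each such interval is divided into $M$ closed subintervals of length $M^{-n}$, each kept independently (of everything else) with probability $p$; $K_n$ is the union of kept subintervals. $V_1$ is length and $V_0$ the Euler characteristic (number of connected components) of a finite union of compact intervals. *)

(* Defs.v *)
From HB Require Import structures.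
From mathcomp Require Import all_boot all_order all_algebra.
From mathcomp Require Import all_classical all_reals all_analysis.
Set Implicit Arguments. Unset Strict Implicit. Unset Printing Implicit Defensive.
Import Order.TTheory GRing.Theory Num.Theory.
Import numFieldNormedType.Exports.
Local Open Scope classical_set_scope.
Local Open Scope ring_scope.

(* Index set of the random coins used up to step n:
   a pair (k, i) with k : 'I_n standing for construction level k+1
   and i : 'I_(M^(k+1)) the index of the interval
   [i M^-(k+1), (i+1) M^-(k+1)] at that level. *)
Definition fpIdx (M n : nat) : finType := {k : 'I_n & 'I_(M ^ k.+1)}.

(* A configuration of the coins: true = the subinterval is kept. *)
Definition fpConf (M n : nat) : finType := {ffun fpIdx M n -> bool}.

Definition fpWeight (R : realType) (M n : nat) (p : R) (w : fpConf M n) : R :=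
  \prod_(x : fpIdx M n) (if w x then p else 1 - p).

Definition fpE (R : realType) (M n : nat) (p : R) (F : fpConf M n -> R) : R :=
  \sum_(w : fpConf M n) fpWeight p w * F w.

(* The level-n interval j survives iff it and all its ancestors at levels
   1..n were kept. *)
Definition fpKept (M n : nat) (w : fpConf M n) (j : 'I_(M ^ n)) : bool :=
  [forall x : fpIdx M n,
     (val (tagged x) == (val j %/ M ^ (n - (val (tag x)).+1))%N) ==> w x].

Definition fpK (R : realType) (M n : nat) (w : fpConf M n) : set R :=
  \bigcup_(j in [set j : 'I_(M ^ n) | fpKept w j])
     [set` `[(val j)%:R / (M%:R ^+ n), (val j).+1%:R / (M%:R ^+ n)]%R].

Definition V1 (R : realType) (A : set R) : R := fine (lebesgue_measure A).

(* V_0 : number of connected components (Euler characteristic of a finite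
   union of compact intervals). *)
Definition components (R : realType) (A : set R) : set (set R) :=
  [set connected_component A x | x in A].
Definition V0 (R : realType) (A : set R) : nat :=
  xget 0%N [set k : nat | (components A #= `I_k)%card].

(* Main.v *)
Require Import Defs.
From HB Require Import structures.
From mathcomp Require Import all_boot all_order all_algebra.
From mathcomp Require Import all_classical all_reals all_analysis.
Set Implicit Arguments. Unset Strict Implicit. Unset Printing Implicit Defensive.
Import Order.TTheory GRing.Theory Num.Theory.
Import numFieldNormedType.Exports.
Local Open Scope ring_scope.
From mathcomp Require Import ring lra zify.
Section Prob.
Variables (R : realType) (M n : nat) (p : R).

Lemma fpE_all (S : {set fpIdx M n}) :
  fpE p (fun w : fpConf M n => ([forall x in S, w x] : bool)%:R) = p ^+ #|S|.
Proof.
rewrite /fpE /fpWeight.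
transitivity (\sum_(w : fpConf M n) \prod_(x : fpIdx M n)
   ((if w x then p else 1 - p) * (if x \in S then (w x)%:R else 1))).
  apply: eq_bigr => w _; rewrite big_split /=; congr (_ * _).
  rewrite -big_mkcond /=.
  case: forallP => [H|H].
    by rewrite big1 // => x xS; have := H x; rewrite xS /= => ->.
  have [x]: exists x, ~~ ((x \in S) ==> w x).
    by apply/existsP; rewrite -negb_forall; apply/forallP.
  rewrite negb_imply => /andP[xS wx].
  by rewrite (bigD1 x) //= (negbTE wx) mul0r.
rewrite -(bigA_distr_bigA (fun (x : fpIdx M n) (b : bool) =>
   (if b then p else 1 - p) * (if x \in S then b%:R else 1))) /= -prodr_const.
rewrite (big_mkcond (fun x => x \in S)) /=.
apply: eq_bigr => x _; rewrite big_bool /=.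
by case: (x \in S); rewrite ?mulr1 ?mulr0 ?addr0 // ?mul1r; ring.
Qed.

End Prob.

Section Anc.
Variables (M n : nat).
Hypothesis M0 : (0 < M)%N.

Definition Anc (j : nat) : {set fpIdx M n} :=
  [set x | val (tagged x) == (j %/ M ^ (n - (val (tag x)).+1))%N].

Lemma fpKeptE (w : fpConf M n) (j : 'I_(M ^ n)) :
  fpKept w j = [forall x in Anc j, w x].
Proof. by apply: eq_forallb => x; rewrite inE. Qed.

Lemma anc_lt (j k : nat) : (j < M ^ n)%N -> (k < n)%N ->
  (j %/ M ^ (n - k.+1) < M ^ k.+1)%N.
Proof.
move=> hj hk; rewrite ltn_divLR ?expn_gt0 ?M0 // -expnD subnKC //.
Qed.

Definition ganc (j : nat) (hj : (j < M ^ n)%N) (k : 'I_n) : fpIdx M n :=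
  existT (fun k : 'I_n => 'I_(M ^ (val k).+1)) k (Ordinal (anc_lt hj (ltn_ord k))).

Lemma ganc_inj j hj : injective (@ganc j hj).
Proof. by move=> k1 k2 /(congr1 (fun x => tag x)). Qed.

Definition Cn (a b : nat) : nat :=
  #|[set k : 'I_n | (a %/ M ^ (n - (val k).+1) == b %/ M ^ (n - (val k).+1))%N]|.

Lemma AncI (a b : nat) (ha : (a < M ^ n)%N) :
  Anc a :&: Anc b = ganc ha @: [set k : 'I_n | (a %/ M ^ (n - (val k).+1) == b %/ M ^ (n - (val k).+1))%N].
Proof.
apply/setP => x; rewrite !inE /=.
apply/idP/imsetP.
  case: x => k i /= /andP[/eqP e1 /eqP e2]; exists k; first by rewrite inE -e1 -e2.
  rewrite /ganc; congr existT; apply: val_inj => /=; by [].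
move=> [k' + ->]; rewrite inE /= => ->; by rewrite eqxx.
Qed.

Lemma card_AncI a b (ha : (a < M ^ n)%N) : #|Anc a :&: Anc b| = Cn a b.
Proof. by rewrite (AncI b ha) card_imset //; apply: ganc_inj. Qed.

Lemma card_Anc a (ha : (a < M ^ n)%N) : #|Anc a| = n.
Proof.
rewrite -(finset.setIid (Anc a)) (card_AncI a ha) /Cn -[RHS]card_ord; apply: eq_card => k.
by rewrite !inE eqxx.
Qed.

Lemma Cn_le a b : (Cn a b <= n)%N.
Proof. by rewrite /Cn -[X in (_ <= X)%N]card_ord max_card. Qed.

End Anc.

Section Exp.
Variables (R : realType) (M n : nat) (p : R).
Hypothesis M0 : (0 < M)%N.

Lemma fpE_ext (F G : fpConf M n -> R) : (forall w, F w = G w) -> fpE p F = fpE p G.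
Proof. by move=> e; apply: eq_bigr => w _; rewrite e. Qed.

Lemma fpE_seq (I : Type) (s : seq I) (F : I -> fpConf M n -> R) :
  fpE p (fun w => \sum_(x <- s) F x w) = \sum_(x <- s) fpE p (F x).
Proof.
rewrite /fpE; under eq_bigr do rewrite mulr_sumr.
by rewrite exchange_big.
Qed.

Lemma count_R (T : Type) (a : pred T) (s : seq T) :
  (count a s)%:R = \sum_(x <- s) ((a x)%:R : R).
Proof. by elim: s => [|x s IH]; rewrite ?big_nil ?big_cons //= natrD IH. Qed.

Definition kappa (w : fpConf M n) (j : nat) : bool :=
  [exists j' : 'I_(M ^ n), (val j' == j) && fpKept w j'].

Lemma kappaE w j : kappa w j = (j < M ^ n)%N && [forall x in Anc M n j, w x].
Proof.
apply/existsP/andP => [[j' /andP[/eqP <- h]]|[hj h]].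
  split; [exact: ltn_ord | by move: h; rewrite fpKeptE].
by exists (Ordinal hj); rewrite eqxx /= fpKeptE.
Qed.

Lemma forall_U (w : fpConf M n) (A B : {set fpIdx M n}) :
  [forall x in A, w x] && [forall x in B, w x] = [forall x in A :|: B, w x].
Proof.
apply/andP/forallP => [[/forallP hA /forallP hB] x|h].
  by rewrite inE; apply/implyP => /orP[xa|xb]; [apply: (implyP (hA x)) | apply: (implyP (hB x))].
split; apply/forallP => x; apply/implyP => hx; apply: (implyP (h x)); by rewrite inE hx ?orbT.
Qed.

Lemma E_count_kept :
  fpE p (fun w => (count (kappa w) (iota 0 (M ^ n)))%:R) = (M ^ n)%N%:R * p ^+ n.
Proof.
rewrite (fpE_ext (G := fun w => \sum_(x <- iota 0 (M ^ n)) ((kappa w x)%:R : R))); last first.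
  by move=> w; rewrite count_R.
rewrite fpE_seq; have -> : iota 0 (M ^ n)%N = index_iota 0 (M ^ n)%N by rewrite /index_iota subn0.
rewrite big_mkord.
rewrite -[in RHS](card_ord (M ^ n)%N) mulr_natl -sumr_const; apply: eq_bigr => j _.
idtac.
rewrite (fpE_ext (G := fun w => ([forall x in Anc M n j, w x] : bool)%:R)); last first.
  by move=> w; rewrite kappaE ltn_ord.
by rewrite fpE_all card_Anc.
Qed.

Lemma E_count_pair :
  fpE p (fun w => (count (fun j => kappa w j && kappa w j.+1) (iota 0 (M ^ n)))%:R) =
  \sum_(j < M ^ n) (if (j.+1 < M ^ n)%N then p ^+ (n + n - Cn M n j j.+1) else 0).
Proof.
rewrite (fpE_ext (G := fun w => \sum_(x <- iota 0 (M ^ n)) ((kappa w x && kappa w x.+1)%:R : R))); last first.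
  by move=> w; rewrite count_R.
rewrite fpE_seq; have -> : iota 0 (M ^ n)%N = index_iota 0 (M ^ n)%N by rewrite /index_iota subn0.
rewrite big_mkord.
apply: eq_bigr => j _.
case: ifP => hj.
  rewrite (fpE_ext (G := fun w => ([forall x in Anc M n j :|: Anc M n j.+1, w x] : bool)%:R)); last first.
    by move=> w; rewrite !kappaE ltn_ord hj /= forall_U.
  by rewrite fpE_all cardsU !card_Anc // card_AncI.
rewrite (fpE_ext (G := fun w => 0)); last first.
  by move=> w; rewrite (kappaE w j.+1) hj andbF.
by rewrite /fpE big1 // => w _; rewrite mulr0.
Qed.
End Exp.

Section Arith.
Variables (R : realType) (m : nat) (p : R).
Local Notation M := m.+1.

Lemma Cn_sum n a b : Cn M n a b = (\sum_(k < n) (a %/ M ^ (n - k.+1) == b %/ M ^ (n - k.+1)))%N.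
Proof.
rewrite /Cn -sum1_card big_mkcond /=; apply: eq_bigr => k _.
by rewrite inE; case: ifP.
Qed.

Lemma Cn_rec n a b : Cn M n.+1 a b = (Cn M n (a %/ M) (b %/ M) + (a == b))%N.
Proof.
rewrite !Cn_sum big_ord_recr /= subnn expn0 !divn1; congr (_ + _)%N.
apply: eq_bigr => k _ /=.
rewrite subSn ?ltn_ord // expnS !divnMA //.
Qed.

Lemma Cn_diag n a : Cn M n a a = n.
Proof. by rewrite /Cn -[RHS]card_ord; apply: eq_card => k; rewrite inE eqxx. Qed.

Lemma sum_nat_mul (F : nat -> R) a b :
  \sum_(i < a * b) F i = \sum_(i < a) \sum_(r < b) F (r + i * b)%N.
Proof.
elim: a => [|a IH]; first by rewrite mul0n !big_ord0.
rewrite big_ord_recr /= -IH mulSn addnC.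
rewrite -!(big_mkord (fun _ => true)) (big_cat_nat _ (n := a * b)) //=; last by apply: leq_addr.
congr (_ + _).
rewrite -{1}(add0n (a * b)%N) big_addn addKn big_mkord.
by apply: eq_bigr => i _.
Qed.

Lemma divq r q : (r < M)%N -> ((r + q * M) %/ M = q)%N.
Proof. by move=> hr; rewrite addnC divnMDl // divn_small // addn0. Qed.

Definition Sterm n (j : nat) : R := if (j.+1 < M ^ n)%N then p ^+ (n + n - Cn M n j j.+1) else 0.
Definition Sdef n : R := \sum_(j < M ^ n) Sterm n j.

Lemma S_rec n : Sdef n.+1 = (M ^ n * m)%N%:R * p ^+ n.+2 + p ^+ 2 * Sdef n.
Proof.
rewrite /Sdef expnSr sum_nat_mul.
transitivity (\sum_(q < M ^ n) (m%:R * p ^+ n.+2 + p ^+ 2 * Sterm n q)); last first.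
  rewrite big_split /= sumr_const card_ord -mulr_sumr -[(_ * _) *+ _]mulr_natr natrM; ring.
apply: eq_bigr => q _.
have hq := ltn_ord q.
rewrite big_ord_recr /=.
congr (_ + _).
  rewrite mulr_natl -[X in _ *+ X]card_ord -sumr_const; apply: eq_bigr => r _.
  have hr := ltn_ord r.
  rewrite /Sterm.
  have h1 : ((r + q * M).+1 < M ^ n.+1)%N.
    rewrite expnSr.
    have : (q.+1 * M <= M ^ n * M)%N by rewrite leq_mul2r hq orbT.
    rewrite mulSn; lia.
  rewrite h1 Cn_rec -addSn (@divq r q (ltnW hr)) (@divq r.+1 q hr) Cn_diag.
  have -> : (r + q * M == r.+1 + q * M)%N = false by lia.
  by congr (_ ^+ _); lia.
rewrite /Sterm.
have e1 : ((m + q * M).+1 = q.+1 * M)%N by rewrite mulSn; lia.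
rewrite e1 expnSr ltn_pmul2r //.
case: ifP => h2; last by rewrite mulr0.
rewrite Cn_rec (@divq m q (ltnSn _)) mulnK //.
have -> : (m + q * M == q.+1 * M)%N = false by rewrite -e1; lia.
rewrite addn0 -exprD; congr (_ ^+ _).
have := Cn_le M n q q.+1; lia.
Qed.

Lemma S_closed n : (M%:R - p) != 0 ->
  (M%:R * p) ^+ n - Sdef n =
  (M%:R * p) ^+ n * (1 - (M%:R - 1) * p / (M%:R - p) * (1 - (p / M%:R) ^+ n)).
Proof.
move=> hMp.
have hM : (M%:R : R) != 0 by rewrite pnatr_eq0.
elim: n => [|n IH].
  rewrite /Sdef big_ord1 /Sterm /= !expr0 subr0; ring.
rewrite S_rec.
have -> : Sdef n = (M%:R * p) ^+ n - ((M%:R * p) ^+ n - Sdef n) by ring.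
rewrite IH natrM natrX !exprMn !exprVn !exprS.
have hQ : (M%:R : R) ^+ n != 0 by rewrite expf_neq0.
have -> : (m%:R : R) = M%:R - 1 by rewrite -natr1 addrK.
field.
have e : (1 + m%:R : R) = M%:R by rewrite -natr1 addrC.
by rewrite hQ e hM hMp.
Qed.

End Arith.

Section Geom.
Local Open Scope classical_set_scope.
Variables (R : realType) (N : nat) (D : R) (kap : nat -> bool).
Hypothesis N0 : (0 < N)%N.
Hypothesis hD : D = N%:R.
Hypothesis hk : forall k, (N <= k)%N -> kap k = false.

Lemma D0 : 0 < D. Proof. by rewrite hD ltr0n. Qed.

Definition Iv (j : nat) : set R := [set` `[j%:R / D, j.+1%:R / D]%R].
Definition Aset : set R := [set t | exists2 j, kap j & Iv j t].

Lemma IvP j t : Iv j t <-> (j%:R <= t * D /\ t * D <= j.+1%:R).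
Proof.
rewrite /Iv /= in_itv /= ler_pdivrMr ?ler_pdivlMr ?D0 //.
by split => [/andP[]|[-> ->]].
Qed.

Lemma natr_lt_le (i j : nat) (x : R) : (i%:R <= x) -> (x < j%:R) -> (i < j)%N.
Proof. by move=> h1 h2; rewrite -(ltr_nat R); apply: (le_lt_trans h1 h2). Qed.

Lemma notA_gap e t : ~~ kap e -> e%:R < t * D -> t * D < e.+1%:R -> ~ Aset t.
Proof.
move=> ke h1 h2 [j kj /IvP [h3 h4]].
have ltj : (j < e.+1)%N by apply: natr_lt_le h3 h2.
have ltj2 : (e < j.+1)%N by rewrite -(ltr_nat R); apply: (lt_le_trans h1 h4).
have ej : j = e by apply/eqP; rewrite eqn_leq -ltnS ltj -ltnS ltj2.
by move: ke; rewrite -ej kj.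
Qed.

Definition rstart (r : nat) : bool := kap r && ((r == 0)%N || ~~ kap r.-1).

Lemma notA_left r t : rstart r -> r%:R - 1 < t * D -> t * D < r%:R -> ~ Aset t.
Proof.
move=> /andP[kr hr] h1 h2 [j kj /IvP [h3 h4]].
have ltj : (j < r)%N by apply: natr_lt_le h3 h2.
have ltj2 : (r < j.+2)%N.
  rewrite -(ltr_nat R); apply: (lt_le_trans (y := t * D + 1)); last first.
    by rewrite -natr1 lerD2r.
  by rewrite -ltrBlDr.
have ej : j = r.-1 by lia.
move: hr; rewrite -ej kj orbF; lia.
Qed.

Lemma run_sub r e t : (forall i, (r <= i < e)%N -> kap i) -> (r < e)%N ->
  r%:R <= t * D -> t * D <= e%:R -> Aset t.
Proof.
move=> hi hre h1 h2.
have key : forall d, (r + d.+1 <= e)%N -> t * D <= (r + d.+1)%:R -> Aset t.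
  elim=> [|d IH] hd h3.
    by exists r; [apply: hi; lia | apply/IvP; rewrite -addn1].
  have [h4|h4] := leP (t * D) (r + d.+1)%:R.
    by apply: IH => //; lia.
  exists (r + d.+1)%N; first by apply: hi; lia.
  by apply/IvP; split; [exact: ltW | rewrite -addnS].
apply: (key (e - r).-1); first lia.
by have -> : (r + (e - r).-1.+1 = e)%N by lia.
Qed.

Lemma ex_end r : exists e, [/\ (r <= e)%N, ~~ kap e & forall i, (r <= i < e)%N -> kap i].
Proof.
have : forall d r, (N - r <= d)%N -> exists e, [/\ (r <= e)%N, ~~ kap e & forall i, (r <= i < e)%N -> kap i].
  elim=> [|d IH] r' hd.
    by exists r'; split => //; [rewrite hk //; lia | move=> i; lia].
  case kr: (kap r'); last by exists r'; split => //; [rewrite kr | move=> i; lia].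
  have [e [h1 h2 h3]] := IH r'.+1 ltac:(lia).
  exists e; split => //; first lia.
  move=> i hi; have [->|ne] := eqVneq i r' => //; apply: h3; lia.
by move/(_ (N - r)%N r (leqnn _)).
Qed.

Lemma ex_start j : kap j -> exists r, [/\ (r <= j)%N, rstart r & forall i, (r <= i <= j)%N -> kap i].
Proof.
elim: j => [|j IH] kj.
  by exists 0%N; split => //; [rewrite /rstart kj | move=> i hi; have -> : i = 0%N by lia].
case kj': (kap j).
  have [r [h1 h2 h3]] := IH kj'; exists r; split => //; first lia.
  move=> i hi; have [->|ne] := eqVneq i j.+1 => //; apply: h3; lia.
exists j.+1; split => //; first by rewrite /rstart kj /= kj'.
by move=> i hi; have -> : i = j.+1 by lia.
Qed.

Definition J r e : set R := [set` `[r%:R / D, e%:R / D]%R].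

Lemma JP r e t : J r e t <-> (r%:R <= t * D /\ t * D <= e%:R).
Proof.
rewrite /J /= in_itv /= ler_pdivrMr ?ler_pdivlMr ?D0 //.
by split => [/andP[]|[-> ->]].
Qed.

Lemma J_sub r e : (forall i, (r <= i < e)%N -> kap i) -> (r < e)%N -> J r e `<=` Aset.
Proof. by move=> hi hre t /JP [h1 h2]; apply: (run_sub hi). Qed.

Lemma cc_run r e x : rstart r -> ~~ kap e -> (r <= e)%N ->
  (forall i, (r <= i < e)%N -> kap i) -> J r e x ->
  connected_component Aset x = J r e.
Proof.
move=> hr ke hre hi Jx.
have hre' : (r < e)%N.
  rewrite ltn_neqAle hre andbT; apply/eqP => ere; move: hr ke.
  by rewrite /rstart ere => /andP[-> _].
have JA := J_sub hi hre'.
apply/seteqP; split; last first.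
  apply: connected_component_max => //.
  apply/connected_intervalP.
  move=> a b /JP[ha1 ha2] /JP[hb1 hb2] z /andP[hz1 hz2]; apply/JP; split.
    by apply: (le_trans ha1); rewrite ler_pM2r ?D0.
  by apply: le_trans hb2; rewrite ler_pM2r ?D0.
move=> y ccy.
have iv := (connected_intervalP _).1 (@component_connected _ Aset x).
have ccx : connected_component Aset x x by apply: connected_component_refl; apply: JA.
have ccA : connected_component Aset x `<=` Aset := @connected_component_sub _ Aset x.
have [xl xr] := (JP r e x).1 Jx.
have hD0 := D0.
apply/JP; split.
  rewrite leNgt; apply/negP => hy.
  have [h1|h1] := ltP (r%:R - 1) (y * D).
    by apply: (notA_left hr h1 hy); apply: ccA.
  pose t := (r%:R - 2^-1) / D.
  have tD : t * D = r%:R - 2^-1 by rewrite /t divfK // gt_eqF.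
  apply: (@notA_left r t hr); [rewrite tD; lra | rewrite tD; lra |].
  apply: ccA; apply: (iv y x) => //; apply/andP; split.
    by rewrite -(ler_pM2r hD0) tD; lra.
  by rewrite -(ler_pM2r hD0) tD; lra.
rewrite leNgt; apply/negP => hy.
have [h1|h1] := ltP (y * D) (e.+1%:R).
  by apply: (notA_gap ke hy h1); apply: ccA.
pose t := (e%:R + 2^-1) / D.
have tD : t * D = e%:R + 2^-1 by rewrite /t divfK // gt_eqF.
have e1 : (e.+1%:R : R) = e%:R + 1 by rewrite -natr1.
apply: (@notA_gap e t ke); [rewrite tD; lra | rewrite tD; lra |].
apply: ccA; apply: (iv x y) => //; apply/andP; split.
  by rewrite -(ler_pM2r hD0) tD; lra.
by rewrite -(ler_pM2r hD0) tD; lra.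
Qed.

Lemma rstart_lt r : rstart r -> (r < N)%N.
Proof. by case/andP => kr _; rewrite ltnNge; apply/negP => /hk; rewrite kr. Qed.

Lemma rDK (r : nat) : r%:R / D * D = r%:R.
Proof. by rewrite divfK // gt_eqF // D0. Qed.

Lemma A_run t : Aset t -> exists r e,
  [/\ rstart r, (r <= e)%N, ~~ kap e, (forall i, (r <= i < e)%N -> kap i) & J r e t].
Proof.
move=> [j kj /IvP[h1 h2]].
have [r [hr1 hr2 hr3]] := ex_start kj.
have [e [he1 he2 he3]] := ex_end r.
have je : (j < e)%N.
  rewrite ltnNge; apply/negP => ej; move: he2; rewrite hr3 //; lia.
exists r, e; split => //; apply/JP; split.
  by apply: le_trans h1; rewrite ler_nat.
by apply: le_trans h2 _; rewrite ler_nat.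
Qed.

Definition rs := [seq r <- iota 0 N | rstart r].
Definition kc := size rs.
Definition fc (i : nat) : set R := connected_component Aset ((nth 0%N rs i)%:R / D).

Lemma J_left r e : (r <= e)%N -> J r e (r%:R / D).
Proof. by move=> h; apply/JP; rewrite rDK lexx ler_nat. Qed.

Lemma fc_J i : (i < kc)%N -> exists e,
  [/\ rstart (nth 0%N rs i), (nth 0%N rs i <= e)%N, ~~ kap e,
      (forall j, (nth 0%N rs i <= j < e)%N -> kap j) & fc i = J (nth 0%N rs i) e].
Proof.
move=> hi; set r := nth 0%N rs i.
have : r \in rs by apply: mem_nth.
rewrite mem_filter => /andP[hr _].
have [e [he1 he2 he3]] := ex_end r.
exists e; split => //; apply: cc_run => //; exact: J_left.
Qed.

Lemma comps_eq : components Aset = fc @` `I_kc.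
Proof.
apply/seteqP; split => C.
  move=> [x Ax <-].
  have [r [e [hr hre ke hi Jx]]] := A_run Ax.
  have rin : r \in rs by rewrite mem_filter hr mem_iota /= add0n rstart_lt.
  exists (index r rs); first by rewrite /= index_mem.
  rewrite /fc nth_index //.
  rewrite (cc_run hr ke hre hi Jx).
apply: cc_run => //; exact: J_left.
move=> [i /= hi <-].
have [e [hr hre ke hj ->]] := fc_J hi.
exists ((nth 0%N rs i)%:R / D).
  apply: J_sub hj _ _ (J_left hre).
  rewrite ltn_neqAle hre andbT; apply/eqP => ere; move: hr ke.
  by rewrite /rstart ere => /andP[-> _].
apply: cc_run => //; exact: J_left.
Qed.

Lemma fc_inj : {in `I_kc &, injective fc}.
Proof.
move=> i i'; rewrite !inE /= => hi hi' eq.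
have [e [hr hre ke hj E1]] := fc_J hi.
have [e' [hr' hre' ke' hj' E2]] := fc_J hi'.
have rs_uniq : uniq rs by rewrite filter_uniq // iota_uniq.
suff h : nth 0%N rs i = nth 0%N rs i' by apply/eqP; rewrite -(nth_uniq 0%N hi hi' rs_uniq) h.
set r := nth 0%N rs i in hr hre ke hj E1 *; set r' := nth 0%N rs i' in hr' hre' ke' hj' E2 *.
have : J r' e' (r%:R / D) by rewrite -E2 -eq E1; exact: J_left.
move=> /JP[]; rewrite rDK !ler_nat => h1 h2.
have h3 : r != e' by apply/eqP => ere; move: hr ke'; rewrite /rstart ere => /andP[-> _].
have [//|ltr] := eqVneq r r'.
have hlt : (r' < r)%N by rewrite ltn_neqAle eq_sym ltr h1.
move: hr; rewrite /rstart (hj' r.-1); last by lia.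
by rewrite orbF; case/andP => _ /eqP r0; move: hlt; rewrite r0.
Qed.

Lemma V0_eq : V0 Aset = kc.
Proof.
rewrite /V0; apply: xget_unique.
  by rewrite /= comps_eq; apply: inj_card_eq; apply: fc_inj.
move=> y /= hy.
have h2 : (components Aset #= `I_kc)%card.
  by rewrite comps_eq; apply: inj_card_eq; apply: fc_inj.
by apply/card_eq_II; apply: card_eq_trans (card_esym hy) h2.
Qed.

Lemma count_runs m : count kap (iota 0 m.+1) =
  (count rstart (iota 0 m.+1) + count (fun j => kap j && kap j.+1) (iota 0 m))%N.
Proof.
elim: m => [|m IH]; first by rewrite /= /rstart /=; case: (kap 0).
have e1 : iota 0 m.+2 = iota 0 m.+1 ++ [:: m.+1] by rewrite -addn1 iotaD.
have e2 : iota 0 m.+1 = iota 0 m ++ [:: m] by rewrite -addn1 iotaD.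
rewrite e1 !count_cat IH e2 !count_cat /= /rstart /=.
by case: (kap m); case: (kap m.+1) => /=; lia.
Qed.

Lemma count_kc : count kap (iota 0 N) = (kc + count (fun j => kap j && kap j.+1) (iota 0 N))%N.
Proof.
have [N' eN] : exists N', N = N'.+1 by exists N.-1; lia.
rewrite /kc size_filter eN count_runs; congr (_ + _)%N.
rewrite -(addn1 N') iotaD count_cat /= add0n (hk (k := N'.+1)) ?andbF ?eN //; lia.
Qed.

Definition Fc (k : nat) : set R := if kap k then Iv k else set0.
Definition Gh (k : nat) : set R := if kap k then [set` `[k%:R / D, k.+1%:R / D[%R] else set0.

Lemma Fc_meas k : measurable (Fc k).
Proof. by rewrite /Fc /Iv; case: (kap k) => //; exact: (measurable_itv `[_, _]). Qed.

Lemma Gh_meas k : measurable (Gh k).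
Proof. by rewrite /Gh; case: (kap k) => //; exact: (measurable_itv `[_, _[). Qed.

Lemma Aset_big : Aset = \big[setU/set0]_(k < N) Fc k.
Proof.
rewrite -bigcup_mkord; apply/seteqP; split => t.
  move=> [j kj Ijt]; exists j; last by rewrite /Fc kj.
  by rewrite /= ltnNge; apply/negP => /hk; rewrite kj.
move=> [j _]; rewrite /Fc; case kj: (kap j) => // h; by exists j.
Qed.

Lemma Gh_sub : \big[setU/set0]_(k < N) Gh k `<=` Aset.
Proof.
rewrite -bigcup_mkord => t [j _]; rewrite /Gh; case kj: (kap j) => // h.
exists j => //; move: h; rewrite /Iv /= !in_itv /= => /andP[-> h].
by rewrite ltW.
Qed.

Lemma Gh_triv : trivIset setT Gh.
Proof.
move=> i j _ _ [t []]; rewrite /Gh.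
case: (kap i) => //; case: (kap j) => //.
rewrite /= !in_itv /= !ler_pdivrMr ?ltr_pdivlMr ?D0 //.
move=> /andP[h1 h2] /andP[h3 h4].
have a1 : (i < j.+1)%N by apply: natr_lt_le h1 h4.
have a2 : (j < i.+1)%N by apply: natr_lt_le h3 h2.
lia.
Qed.

Lemma mu_int (k : nat) : lebesgue_measure (Iv k) = (D^-1)%:E.
Proof.
rewrite /Iv lebesgue_measure_itv /= lte_fin ltr_pM2r ?invr_gt0 ?D0 // ltr_nat ltnSn.
by rewrite -EFinB -mulrBl -natrB // subSnn mul1r.
Qed.

Lemma mu_int2 (k : nat) : lebesgue_measure ([set` `[k%:R / D, k.+1%:R / D[%R] : set R) = (D^-1)%:E.
Proof.
rewrite lebesgue_measure_itv /= lte_fin ltr_pM2r ?invr_gt0 ?D0 // ltr_nat ltnSn.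
by rewrite -EFinB -mulrBl -natrB // subSnn mul1r.
Qed.

Lemma sum_kap :
  (\sum_(k < N) (if kap k then (D^-1)%:E else 0%E) = ((count kap (iota 0 N))%:R / D)%:E)%E.
Proof.
transitivity (\sum_(k < N) ((kap k)%:R / D)%:E)%E.
  by apply: eq_bigr => k _; case: (kap k); rewrite /= ?mul1r ?mul0r.
rewrite sumEFin -mulr_suml; congr (_ * _)%:E.
have -> : iota 0 N = index_iota 0 N by rewrite /index_iota subn0.
rewrite -(big_mkord xpredT (fun k => ((kap k)%:R : R))).
elim: (index_iota 0 N) => [|x l IH]; by rewrite ?big_nil ?big_cons //= natrD IH.
Qed.

Lemma mu_Aset : lebesgue_measure Aset = ((count kap (iota 0 N))%:R / D)%:E.
Proof.
rewrite -sum_kap; apply/eqP; rewrite eq_le; apply/andP; split.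
  rewrite {1}Aset_big.
  have -> : (\sum_(k < N) (if kap k then (D^-1)%:E else 0%E) = \sum_(k < N) lebesgue_measure (Fc k))%E.
    by apply: eq_bigr => k _; rewrite /Fc; case: (kap k); rewrite ?mu_int ?measure0.
  apply: content_subadditive.
  - by move=> k _; exact: Fc_meas.
  - by apply: bigsetU_measurable => k _; exact: Fc_meas.
  - by [].
have -> : (\sum_(k < N) (if kap k then (D^-1)%:E else 0%E) = \sum_(k < N) lebesgue_measure (Gh k))%E.
  by apply: eq_bigr => k _; rewrite /Gh; case: (kap k); rewrite ?mu_int2 ?measure0.
rewrite -(@measure_bigsetU _ _ _ lebesgue_measure Gh Gh_meas Gh_triv N).
apply: le_measure; last exact: Gh_sub.
- by rewrite inE; apply: bigsetU_measurable => k _; exact: Gh_meas.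
- by rewrite inE Aset_big; apply: bigsetU_measurable => k _; exact: Fc_meas.
Qed.

End Geom.


Section Main.
Local Open Scope classical_set_scope.

Lemma fpK_Aset (R : realType) (M n : nat) (M0 : (0 < M)%N) (w : fpConf M n) :
  @fpK R M n w = Aset (M%:R ^+ n) (kappa w).
Proof.
apply/seteqP; split => t.
  move=> [j /= hj ht]; exists (val j) => //.
  by apply/existsP; exists j; rewrite eqxx hj.
move=> [j /existsP [j' /andP[/eqP ej hj']] ht].
by exists j'; rewrite //= ej.
Qed.

End Main.

Theorem proposition4p2 (R : realType) (M : nat) (p : R) (n : nat) :
  (2 <= M)%N -> 0 <= p -> p <= 1 ->
  fpE p (fun w : fpConf M n => V1 (@fpK R M n w)) = p ^+ n /\
  fpE p (fun w : fpConf M n => ((V0 (@fpK R M n w))%:R : R)) =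
    (M%:R * p) ^+ n *
      (1 - (M%:R - 1) * p / (M%:R - p) * (1 - (p / M%:R) ^+ n)).
Proof.
move=> hM hp0 hp1.
have M0 : (0 < M)%N by lia.
have N0 : (0 < M ^ n)%N by rewrite expn_gt0 M0.
have hD : (M%:R ^+ n : R) = (M ^ n)%N%:R by rewrite natrX.
have hk (w : fpConf M n) : forall k, (M ^ n <= k)%N -> kappa w k = false.
  by move=> k hk; rewrite kappaE ltnNge hk.
have DN0 : (M%:R ^+ n : R) != 0 by rewrite hD pnatr_eq0 -lt0n.
split.
  rewrite (@fpE_ext R M n p _ (fun w => (count (kappa w) (iota 0 (M ^ n)))%:R / M%:R ^+ n)); last first.
    move=> w; rewrite /V1 fpK_Aset // (mu_Aset N0 hD (hk w)) //.
  rewrite /fpE; under eq_bigr do rewrite mulrA; rewrite -mulr_suml.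
  have := @E_count_kept R M n p M0; rewrite /fpE => ->.
  by rewrite -hD mulrC mulKf.
rewrite (@fpE_ext R M n p _ (fun w => (count (kappa w) (iota 0 (M ^ n)))%:R
   - (count (fun j => kappa w j && kappa w j.+1) (iota 0 (M ^ n)))%:R)); last first.
  move=> w; rewrite fpK_Aset // (V0_eq N0 hD (hk w)) (count_kc N0 (hk w)) natrD addrK //.
rewrite /fpE.
under eq_bigr do rewrite mulrBr.
rewrite sumrB.
have := @E_count_kept R M n p M0; rewrite /fpE => ->.
have := @E_count_pair R M n p M0; rewrite /fpE => ->.
case: M hM M0 {hD DN0 hk N0} => // m hm _.
have hMp : (m.+1%:R - p : R) != 0.
  rewrite subr_eq0 gt_eqF //; apply: (le_lt_trans hp1); rewrite ltr1n; lia.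
rewrite -(S_closed n hMp) /Sdef /Sterm natrX exprMn //.
Qed.
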